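(* Let $P_1=(x_1,v_1)$ and $P_2=(x_2,v_2)$ be points of $\mathcal{H}$, let $\theta_i=\delta(x_i,v_i)$ for $i=1,2$, and suppose $0\le\theta_1\le\theta_2<2\pi$ and $1\le v_1\le v_2$. Then $d_H((0,1),P_1)\le d_H((0,1),P_2)$.
   Context: Let $\mathcal{H}=\{(x,v)\in\mathbb{R}^2:v\ge0\}$ and $d_H$ the Riemannian distance on $\mathcal{H}$ induced by $ds^2=v^{-1}(dx^2+dv^2)$ on the open upper half-plane (extended to the boundary). For $v\ge0$, $0<|\delta|<2\pi$, $f(v,\delta)=\frac{(v+1)(\delta-\sin\delta)+2\sqrt v(2\sin\frac\delta2-\delta\cos\frac\delta2)}{2\sin^2\frac\delta2}$, $f(v,0)=0$, and $\delta(x,v)$ denotes the unique $\delta\in(-2\pi,2\pi)$ with $f(v,\delta)=x$. *)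

(* Defs.v *)
From Stdlib Require Import Reals Lra ClassicalEpsilon.
From Coquelicot Require Import Coquelicot.
Open Scope R_scope.

Definition f_fun (v d : R) : R :=
  if Req_EM_T d 0 then 0
  else ((v + 1) * (d - sin d)
        + 2 * sqrt v * (2 * sin (d / 2) - d * cos (d / 2)))
       / (2 * (sin (d / 2)) ^ 2).

(* delta(x,v): the unique delta in (-2 pi, 2 pi) with f(v,delta) = x
   (chosen by Hilbert's epsilon; by the paper it is unique). *)
Definition delta (x v : R) : R :=
  epsilon (inhabits 0)
    (fun d => -2 * PI < d < 2 * PI /\ f_fun v d = x).

Definition admissible (gx gv : R -> R) (x1 v1 x2 v2 : R) : Prop :=
  gx 0 = x1 /\ gv 0 = v1 /\ gx 1 = x2 /\ gv 1 = v2 /\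
  forall t, 0 <= t <= 1 ->
    ex_derive gx t /\ ex_derive gv t /\
    continuous (Derive gx) t /\ continuous (Derive gv) t /\
    0 < gv t.

Definition hlength (gx gv : R -> R) : R :=
  RInt (fun t => sqrt ((Derive gx t ^ 2 + Derive gv t ^ 2) / gv t)) 0 1.

Definition dH (x1 v1 x2 v2 : R) : Rbar :=
  Glb_Rbar (fun L => exists gx gv,
    admissible gx gv x1 v1 x2 v2 /\ L = hlength gx gv).

(* Main.v *)
Require Import Defs.
From Stdlib Require Import Reals Lra Ranalysis5 ClassicalEpsilon.
From Coquelicot Require Import Coquelicot.
Open Scope R_scope.

Definition fF (v d : R) : R :=
  ((v + 1) * (d - sin d)
        + 2 * sqrt v * (2 * sin (d / 2) - d * cos (d / 2)))
       / (2 * (sin (d / 2)) ^ 2).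

Lemma f_fun_eq v d : d <> 0 -> f_fun v d = fF v d.
Proof. intro H. unfold f_fun. destruct (Req_EM_T d 0); [lra|reflexivity]. Qed.

Lemma fF_odd v d : fF v (-d) = - fF v d.
Proof.
  unfold fF. replace (-d/2) with (-(d/2)) by field.
  rewrite !sin_neg, cos_neg.
  destruct (Req_dec (sin (d/2)) 0) as [E|E].
  - rewrite E. unfold Rdiv. replace (2 * (- 0) ^ 2) with 0 by ring.
    replace (2*0^2) with 0 by ring. rewrite Rinv_0. ring.
  - field. exact E.
Qed.

Lemma sin_lb_eq a : sin_lb a = a - a^3/6 + a^5/120 - a^7/5040.
Proof. unfold sin_lb, sin_approx, Rtrigo_alt.sin_term. simpl. field. Qed.
Lemma cos_lb_eq a : cos_lb a = 1 - a^2/2 + a^4/24 - a^6/720.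
Proof. unfold cos_lb, cos_approx, Rtrigo_alt.cos_term. simpl. field. Qed.

Lemma sin_ge_cubic a : 0 <= a <= 1 -> a - a^3/6 <= sin a.
Proof.
  intros H. pose proof PI2_3_2. destruct (SIN a) as [H1 _]; try lra.
  rewrite sin_lb_eq in H1.
  assert (0 <= a^5) by (apply pow_le; lra).
  assert (a^7 <= a^5).
    { replace (a^7) with (a^5 * (a*a)) by ring.
      assert (a*a <= 1) by nra.
      nra. }
  lra.
Qed.

Lemma cos_ge_quad a : 0 <= a <= 1 -> 1 - a^2/2 <= cos a.
Proof.
  intros H. pose proof PI2_3_2. destruct (COS a) as [H1 _]; try lra.
  rewrite cos_lb_eq in H1.
  assert (0 <= a^4) by (apply pow_le; lra).
  assert (a^6 <= a^4).
    { replace (a^6) with (a^4 * (a*a)) by ring.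
      assert (a*a <= 1) by nra.
      nra. }
  lra.
Qed.

Lemma sin_le_id a : 0 <= a -> sin a <= a.
Proof. intros H. destruct (Req_dec a 0). subst; rewrite sin_0; lra.
  left; apply sin_lt_x; lra. Qed.

Lemma fF_small v d : 1 <= v -> 0 < d <= 1 ->
  fF v d <= 8 * ((v+1)/6 + sqrt v / 4) * d.
Proof.
  intros Hv Hd. unfold fF.
  set (u := d/2).
  assert (Hu : 0 < u <= 1/2) by (unfold u; lra).
  assert (Hd1 : d - sin d <= d^3/6) by (pose proof (sin_ge_cubic d); lra).
  assert (Hsu : sin u <= u) by (apply sin_le_id; lra).
  assert (Hcu : 1 - u^2/2 <= cos u) by (apply cos_ge_quad; lra).
  assert (Hb : 2 * sin u - d * cos u <= d^3/8).
  { replace d with (2*u) by (unfold u; field).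
    assert (0 <= u^3) by (apply pow_le; lra). nra. }
  assert (Hsl : u/2 <= sin u).
  { pose proof (sin_ge_cubic u). assert (u^3 <= u) by nra. nra. }
  assert (Hsv : 0 <= sqrt v) by apply sqrt_pos.
  assert (Hnum : (v + 1) * (d - sin d) + 2 * sqrt v * (2 * sin u - d * cos u)
                 <= ((v+1)/6 + sqrt v/4) * d^3).
  { assert ((v+1) * (d - sin d) <= (v+1) * (d^3/6)) by (apply Rmult_le_compat_l; lra).
    assert (2*sqrt v * (2 * sin u - d * cos u) <= 2 * sqrt v * (d^3/8))
      by (apply Rmult_le_compat_l; lra). lra. }
  assert (Hden : d^2/8 <= 2 * (sin u)^2).
  { replace d with (2*u) by (unfold u; field). nra. }
  assert (Hd2 : 0 < d^2/8) by (apply Rmult_lt_0_compat; [apply pow_lt; lra| lra]).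
  apply Rle_trans with (Rmax 0 (((v+1)/6 + sqrt v/4) * d^3) / (d^2/8)).
  - unfold Rdiv. destruct (Rle_dec 0 ((v + 1) * (d - sin d) + 2 * sqrt v * (2 * sin u - d * cos u))).
    + apply Rmult_le_compat; try lra.
      * apply Rlt_le, Rinv_0_lt_compat; lra.
      * apply Rle_trans with (2:=Rmax_r _ _); lra.
      * apply Rinv_le_contravar; lra.
    + apply Rle_trans with 0.
      * assert (0 < / (2 * sin u ^ 2)) by (apply Rinv_0_lt_compat; lra). nra.
      * apply Rmult_le_pos. apply Rmax_l. apply Rlt_le, Rinv_0_lt_compat; lra.
  - assert (0 <= ((v+1)/6 + sqrt v/4) * d^3) by (apply Rmult_le_pos; [lra| apply pow_le; lra]).
    rewrite Rmax_right by lra. right. field. lra.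
Qed.

Lemma fF_large v e : 1 <= v -> 0 < e <= 1/2 -> 2 / e^2 <= fF v (2*PI - 2*e).
Proof.
  intros Hv He. pose proof PI2_3_2. unfold fF.
  replace ((2*PI - 2*e)/2) with (PI - e) by field.
  rewrite sin_PI_x, Rtrigo_facts.cos_pi_minus.
  replace (sin (2*PI - 2*e)) with (- sin (2*e)).
  2:{ replace (2*PI - 2*e) with (-(2*e) + 2*INR 1 * PI) by (simpl; ring).
      rewrite sin_period, sin_neg. reflexivity. }
  assert (0 <= sin (2*e)) by (apply sin_ge_0; lra).
  assert (0 < sin e) by (apply sin_gt_0; lra).
  assert (sin e <= e) by (apply sin_le_id; lra).
  assert (0 <= cos e) by (apply cos_ge_0; lra).
  assert (Hsv : 0 <= sqrt v) by apply sqrt_pos.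
  assert (Hn : 4 <= (v + 1) * (2 * PI - 2 * e - - sin (2 * e)) +
     2 * sqrt v * (2 * sin e - (2 * PI - 2 * e) * - cos e)).
  { assert (0 <= 2 * sqrt v * (2 * sin e - (2 * PI - 2 * e) * - cos e)).
    { apply Rmult_le_pos; [lra|]. nra. }
    assert (4 <= (v + 1) * (2 * PI - 2 * e - - sin (2 * e))) by nra. lra. }
  assert (0 < 2 * sin e ^2) by (simpl; nra).
  assert (2 * sin e ^2 <= 2 * e^2) by (simpl; nra).
  apply Rle_trans with (4 / (2 * e^2)).
  - right. field. lra.
  - unfold Rdiv. apply Rmult_le_compat; try lra.
    + apply Rlt_le, Rinv_0_lt_compat. simpl; nra.
    + apply Rinv_le_contravar; lra.
Qed.

Lemma fF_cont v d : 0 < d < 2*PI -> continuity_pt (fF v) d.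
Proof.
  intros Hd. apply (proj2 (continuity_pt_filterlim _ _)).
  apply (ex_derive_continuous (fF v)). unfold fF. auto_derive.
  assert (0 < sin (d/2)) by (apply sin_gt_0; lra).
  apply Rgt_not_eq, Rlt_gt. simpl. nra.
Qed.

Lemma fF_exists_pos v x : 1 <= v -> 0 < x -> exists d, 0 < d < 2*PI /\ fF v d = x.
Proof.
  intros Hv Hx. pose proof PI2_3_2.
  set (C := 8 * ((v+1)/6 + sqrt v / 4)).
  assert (HC : 0 < C) by (unfold C; pose proof (sqrt_pos v); lra).
  set (d0 := Rmin 1 (x / (C+1))).
  assert (Hd0 : 0 < d0 <= 1).
  { unfold d0. split. apply Rmin_glb_lt; [lra|]. apply Rdiv_lt_0_compat; lra. apply Rmin_l. }
  assert (H0 : fF v d0 < x).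
  { eapply Rle_lt_trans. apply fF_small; lra. fold C.
    assert (d0 <= x/(C+1)) by apply Rmin_r.
    apply Rle_lt_trans with (C * (x/(C+1))). apply Rmult_le_compat_l; lra.
    apply Rmult_lt_reg_r with (C+1); [lra|]. field_simplify; nra. }
  set (e := / (Rabs x + 2)).
  assert (He : 0 < e <= 1/2).
  { unfold e. pose proof (Rabs_pos x). split. apply Rinv_0_lt_compat; lra.
    replace (1/2) with (/2) by field. apply Rinv_le_contravar; lra. }
  assert (H1 : x < fF v (2*PI - 2*e)).
  { eapply Rlt_le_trans; [|apply fF_large; lra].
    unfold e. replace (2 / (/ (Rabs x + 2))^2) with (2 * (Rabs x + 2)^2).
    2:{ field. pose proof (Rabs_pos x); lra. }
    pose proof (Rle_abs x). pose proof (Rabs_pos x). nra. }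
  destruct (IVT_interv (fun d => fF v d - x) d0 (2*PI - 2*e)) as [z [Hz1 Hz2]].
  - intros a Ha. apply continuity_pt_minus. apply fF_cont; lra. apply continuity_pt_const. intros ? ?; reflexivity.
  - lra.
  - lra.
  - lra.
  - exists z. split; lra.
Qed.

Lemma f_exists v x : 1 <= v -> exists d, -2*PI < d < 2*PI /\ f_fun v d = x.
Proof.
  intros Hv. pose proof PI2_3_2.
  destruct (Rtotal_order x 0) as [Hx|[Hx|Hx]].
  - destruct (fF_exists_pos v (-x) Hv) as [d [Hd E]]; [lra|].
    exists (-d). split; [lra|]. rewrite f_fun_eq by lra. rewrite fF_odd. lra.
  - exists 0. split; [lra|]. unfold f_fun. destruct (Req_EM_T 0 0); [auto|lra].
  - destruct (fF_exists_pos v x Hv) as [d [Hd E]]; [lra|].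
    exists d. split; [lra|]. rewrite f_fun_eq by lra. exact E.
Qed.

Lemma delta_spec x v : 1 <= v ->
  -2*PI < delta x v < 2*PI /\ f_fun v (delta x v) = x.
Proof.
  intros Hv. unfold delta. apply epsilon_spec. apply f_exists. exact Hv.
Qed.

Lemma fF_identity (b s c T cb sb r : R) :
  sb <> 0 -> c <> 0 -> sb^2 + cb^2 = 1 -> s = T*c -> c^2 * (1 + T^2) = 1 ->
  r = T * sb + cb ->
  ((r^2 + 1) * (2*b - 2*sb*cb) + 2 * r * (2 * sb - 2*b * cb)) / (2 * sb^2)
  = (b + s*c - (s*cb - c*sb)*(c*cb + s*sb)) / c^2.
Proof.
  intros Hsb Hc Hp Hs HcT Hr. subst s.
  assert (Hc2 : / c^2 = 1 + T^2).
  { assert (c^2 <> 0) by (apply pow_nonzero; auto).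
    apply (Rmult_eq_reg_l (c^2)); auto. rewrite Rinv_r by auto. lra. }
  transitivity ((b*(1+r^2-2*r*cb) + sb*(2*r - cb - r^2*cb))/sb^2).
  { field. auto. }
  transitivity (b*(1+T^2) + T - (T*cb - sb)*(cb + T*sb)).
  2:{ rewrite <- Hc2. field. auto. }
  assert (E : (b*(1+T^2) + T - (T*cb - sb)*(cb + T*sb)) * sb^2
             = b*(1+r^2-2*r*cb) + sb*(2*r - cb - r^2*cb)).
  { subst r. 
    assert (D : (b*(1+T^2) + T - (T*cb - sb)*(cb + T*sb)) * sb^2
             - (b*(1+(T * sb + cb)^2-2*(T * sb + cb)*cb) + sb*(2*(T * sb + cb) - cb - (T * sb + cb)^2*cb))
             = (sb^2+cb^2-1) * (sb*cb + T*sb^2 + b)) by ring.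
    rewrite Hp in D. lra. }
  rewrite <- E. field. auto.
Qed.

Definition Tt (v d : R) := (sqrt v - cos (d/2)) / sin (d/2).

Lemma sqrt_ge1 v : 1 <= v -> 1 <= sqrt v.
Proof. intros. rewrite <- sqrt_1. apply sqrt_le_1_alt. lra. Qed.

Lemma geo v d : 1 <= v -> 0 < d < 2*PI ->
  let b := d/2 in let T := Tt v d in let a := atan T in let c := cos a in
  0 <= T /\ 0 <= a < PI/2 /\ 0 < c <= 1 /\ sin a = T * c /\ c^2 * (1+T^2) = 1 /\
  cos (a - b) = c * sqrt v /\ -(PI/2) < a - b < PI/2 /\ 0 < b < PI /\
  fF v d = (b + sin a * c - sin (a-b) * cos (a-b)) / c^2.
Proof.
  intros Hv Hd b T a c. pose proof PI2_3_2.
  assert (Hb : 0 < b < PI) by (unfold b; lra).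
  assert (Hsb : 0 < sin b) by (apply sin_gt_0; lra).
  assert (Hr : 1 <= sqrt v) by (apply sqrt_ge1; auto).
  assert (Hcb : cos b <= 1) by (pose proof (COS_bound b); lra).
  assert (HT : 0 <= T) by (unfold T, Tt; fold b; apply Rdiv_le_0_compat; lra).
  assert (Hs1 : 0 < sqrt (1 + T^2)) by (apply sqrt_lt_R0; nra).
  assert (Hs2 : sqrt (1+T^2) * sqrt (1+T^2) = 1 + T^2) by (apply sqrt_sqrt; nra).
  assert (Hc : c = 1 / sqrt (1+T^2)) by (unfold c, a; rewrite cos_atan; unfold Rsqr; f_equal; f_equal; ring).
  assert (Hs : sin a = T * c).
  { unfold a. rewrite sin_atan, Hc. unfold Rsqr. replace (1+T*T) with (1+T^2) by ring. field. lra. }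
  assert (Hc0 : 0 < c) by (rewrite Hc; apply Rdiv_lt_0_compat; lra).
  assert (HcT : c^2 * (1+T^2) = 1).
  { rewrite Hc. set (s := sqrt (1+T^2)) in *. rewrite <- Hs2. field. lra. }
  assert (Hc1 : c <= 1) by nra.
  assert (Ha : 0 <= a < PI/2).
  { split. unfold a. destruct HT as [HT|HT]. rewrite <- atan_0. left; apply atan_increasing; auto.
    rewrite <- HT, atan_0; lra. pose proof (atan_bound T); unfold a; lra. }
  assert (HTsb : T * sin b = sqrt v - cos b) by (unfold T, Tt; fold b; field; lra).
  assert (Hcab : cos (a - b) = c * sqrt v) by (rewrite cos_minus, Hs; fold c; nra).
  assert (Hab : -(PI/2) < a - b < PI/2).
  { split; [|lra]. destruct (Rle_lt_dec (a-b) (-(PI/2))) as [H1|H1]; [|lra].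
    exfalso. assert (cos (b - a) <= 0) by (apply cos_le_0; lra).
    replace (b - a) with (-(a-b)) in H0 by ring. rewrite cos_neg in H0. nra. }
  repeat split; try lra.
  unfold fF. replace d with (2*b) at 1 2 by (unfold b; field). fold b. rewrite sin_2a.
  replace v with (sqrt v ^2) at 1 by (simpl; rewrite Rmult_1_r; apply sqrt_sqrt; lra).
  rewrite sin_minus.
  replace (d * cos b) with (2 * b * cos b) by (unfold b; field).
  rewrite cos_minus. fold c.
  apply (fF_identity b (sin a) c T); try lra. pose proof (sin2_cos2 b). unfold Rsqr in *. lra.
Qed.

Lemma mono_MVT (f df : R -> R) (a b : R) : a <= b ->
  (forall x, a < x < b -> is_derive f x (df x)) ->
  (forall x, a <= x <= b -> continuity_pt f x) ->
  (forall x, a <= x <= b -> 0 <= df x) -> f a <= f b.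
Proof.
  intros Hab Hd Hc Hp.
  destruct (MVT_gen f a b df) as [c [Hc1 Hc2]].
  - intros x Hx. rewrite Rmin_left, Rmax_right in Hx by lra. apply Hd; lra.
  - intros x Hx. rewrite Rmin_left, Rmax_right in Hx by lra. apply Hc; lra.
  - rewrite Rmin_left, Rmax_right in Hc1 by lra.
    assert (0 <= df c * (b - a)) by (apply Rmult_le_pos; [apply Hp; lra| lra]). lra.
Qed.

Lemma cont_of_derive (f : R -> R) x : ex_derive f x -> continuity_pt f x.
Proof. intros H. apply (proj2 (continuity_pt_filterlim _ _)). apply (ex_derive_continuous f). exact H. Qed.

Lemma sin_minus_xcos b : 0 <= b <= PI -> b * cos b <= sin b.
Proof.
  intros Hb.
  assert (H := mono_MVT (fun x => sin x - x * cos x) (fun x => x * sin x) 0 b).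
  simpl in H. rewrite sin_0, Rmult_0_l in H.
  assert (0 <= sin b - b * cos b); [|lra].
  replace 0 with (0 - 0) by ring. apply H; try lra.
  - intros x Hx. auto_derive; auto. ring.
  - intros x Hx. apply cont_of_derive. auto_derive; auto.
  - intros x Hx. apply Rmult_le_pos; [lra| apply sin_ge_0; lra].
Qed.

Lemma sinc_decr b1 b2 : 0 < b1 <= b2 -> b2 <= PI -> b1 * sin b2 <= b2 * sin b1.
Proof.
  intros H1 H2.
  assert (H := mono_MVT (fun x => - (sin x / x)) (fun x => (sin x - x * cos x)/ x^2) b1 b2).
  simpl in H.
  assert (- (sin b1 / b1) <= - (sin b2 / b2)).
  { apply H; try lra.
    - intros x Hx. auto_derive; [lra|]. field. lra.
    - intros x Hx. apply cont_of_derive. auto_derive. lra.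
    - intros x Hx. apply Rdiv_le_0_compat. pose proof (sin_minus_xcos x). lra.
      nra. }
  assert (sin b2 / b2 <= sin b1 / b1) by lra.
  apply (Rmult_le_compat_r (b1*b2)) in H3; [|nra].
  replace (sin b2 / b2 * (b1 * b2)) with (b1 * sin b2) in H3 by (field; lra).
  replace (sin b1 / b1 * (b1 * b2)) with (b2 * sin b1) in H3 by (field; lra). lra.
Qed.

Definition Dist (v d : R) : R :=
  if Req_EM_T d 0 then 2 * (sqrt v - 1) else d * sqrt (1 + (Tt v d)^2).

Lemma Dist_form v d : 1 <= v -> 0 < d < 2*PI ->
  Dist v d = (d / sin (d/2)) * sqrt (1 + sqrt v ^2 - 2 * sqrt v * cos (d/2)).
Proof.
  intros Hv Hd. pose proof PI2_3_2. unfold Dist. destruct (Req_EM_T d 0); [lra|].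
  assert (Hsb : 0 < sin (d/2)) by (apply sin_gt_0; lra).
  assert (Hp := sin2_cos2 (d/2)). unfold Rsqr in Hp.
  assert (HX : 0 <= 1 + sqrt v ^2 - 2 * sqrt v * cos (d/2)).
  { pose proof (sqrt_ge1 v Hv). pose proof (COS_bound (d/2)). nra. }
  unfold Rdiv at 1. rewrite Rmult_assoc. f_equal.
  apply sqrt_lem_1. nra. apply Rmult_le_pos. apply Rlt_le, Rinv_0_lt_compat; lra. apply sqrt_pos.
  transitivity ((sqrt (1 + sqrt v ^ 2 - 2 * sqrt v * cos (d / 2)) * sqrt (1 + sqrt v ^ 2 - 2 * sqrt v * cos (d / 2))) / (sin (d/2))^2).
  field. lra. rewrite sqrt_sqrt by lra. unfold Tt. field_simplify; [|lra..]. f_equal. nra.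
Qed.

Lemma Dist_mono v1 v2 d1 d2 : 1 <= v1 -> v1 <= v2 -> 0 <= d1 -> d1 <= d2 -> d2 < 2*PI ->
  Dist v1 d1 <= Dist v2 d2.
Proof.
  intros Hv1 Hv12 Hd1 Hd12 Hd2. pose proof PI2_3_2.
  assert (Hr1 := sqrt_ge1 v1 Hv1).
  assert (Hr12 : sqrt v1 <= sqrt v2) by (apply sqrt_le_1_alt; lra).
  set (r1 := sqrt v1) in *. set (r2 := sqrt v2) in *.
  destruct (Req_dec d2 0) as [E2|E2].
  - assert (d1 = 0) by lra. subst. unfold Dist. destruct (Req_EM_T 0 0); [|lra]. fold r1 r2. lra.
  - rewrite (Dist_form v2 d2) by lra. fold r2.
    assert (Hsb2 : 0 < sin (d2/2)) by (apply sin_gt_0; lra).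
    assert (Hsq2 : 0 <= 1 + r2 ^2 - 2 * r2 * cos (d2/2)).
    { pose proof (COS_bound (d2/2)). nra. }
    destruct (Req_dec d1 0) as [E1|E1].
    + subst d1. unfold Dist. destruct (Req_EM_T 0 0); [|lra]. fold r1.
      assert (2 <= d2 / sin (d2/2)).
      { apply (Rmult_le_reg_r (sin (d2/2))); auto. unfold Rdiv; rewrite Rmult_assoc, Rinv_l by lra.
        pose proof (sin_le_id (d2/2)). lra. }
      assert (r2 - 1 <= sqrt (1 + r2 ^2 - 2 * r2 * cos (d2/2))).
      { rewrite <- (sqrt_pow2 (r2 - 1)) by lra. apply sqrt_le_1_alt.
        pose proof (COS_bound (d2/2)). nra. }
      nra.
    + rewrite (Dist_form v1 d1) by lra. fold r1.
      assert (Hsb1 : 0 < sin (d1/2)) by (apply sin_gt_0; lra).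
      assert (A : d1 / sin (d1/2) <= d2 / sin (d2/2)).
      { pose proof (sinc_decr (d1/2) (d2/2)).
        apply (Rmult_le_reg_r (sin (d1/2) * sin (d2/2))). nra.
        field_simplify; try lra. }
      assert (Hc : cos (d2/2) <= cos (d1/2)) by (apply cos_decr_1; lra).
      assert (B : sqrt (1 + r1 ^2 - 2 * r1 * cos (d1/2)) <= sqrt (1 + r2 ^2 - 2 * r2 * cos (d2/2))).
      { apply sqrt_le_1_alt. pose proof (COS_bound (d1/2)). pose proof (COS_bound (d2/2)). nra. }
      apply Rmult_le_compat; auto.
      * apply Rdiv_le_0_compat; lra.
      * apply sqrt_pos.
Qed.

Lemma dH_le_curve gx gv x1 v1 x2 v2 :
  admissible gx gv x1 v1 x2 v2 -> Rbar_le (dH x1 v1 x2 v2) (hlength gx gv).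
Proof.
  intros H. unfold dH. destruct (Glb_Rbar_correct (fun L => exists gx gv,
    admissible gx gv x1 v1 x2 v2 /\ L = hlength gx gv)) as [H1 _].
  apply H1. exists gx, gv. auto.
Qed.

Lemma cont_R (f : R -> R) x : ex_derive f x -> continuous f x.
Proof. intros H. apply (ex_derive_continuous (K:=R_AbsRing) (V:=R_NormedModule) f x H). Qed.

Lemma hlength_const gx gv L :
  (forall t, 0 < t < 1 -> sqrt ((Derive gx t ^ 2 + Derive gv t ^ 2) / gv t) = L) ->
  hlength gx gv = L.
Proof.
  intros H. unfold hlength. rewrite (RInt_ext _ (fun _ => L)).
  - rewrite RInt_const. unfold scal; simpl; unfold mult; simpl. ring.
  - intros x Hx. rewrite Rmin_left, Rmax_right in Hx by lra. apply H; lra.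
Qed.

Lemma upper_vert v : 1 <= v -> Rbar_le (dH 0 1 0 v) (2 * (sqrt v - 1)).
Proof.
  intros Hv. pose proof (sqrt_ge1 v Hv) as Hr. set (r := sqrt v) in *.
  set (gx := fun _ : R => 0). set (gv := fun t => (1 + t * (r - 1))^2).
  assert (Dx : forall t, Derive gx t = 0) by (intros; unfold gx; apply Derive_const).
  assert (Dv : forall t, Derive gv t = 2 * (r - 1) * (1 + t * (r - 1))).
  { intros t. apply is_derive_unique. unfold gv. auto_derive; auto. ring. }
  replace (2 * (r - 1)) with (hlength gx gv).
  apply dH_le_curve.
  - unfold admissible. split; [reflexivity|]. split; [unfold gv; ring|]. split; [reflexivity|]. split.
    + unfold gv. unfold r. simpl. rewrite Rmult_1_r. replace (1 + 1 * (sqrt v - 1)) with (sqrt v) by ring.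
      apply sqrt_sqrt; lra.
    + intros t Ht. split; [|split; [|split; [|split]]].
    * unfold gx. auto_derive; auto.
    * unfold gv. auto_derive; auto.
    * apply (continuous_ext (fun _ => 0)). intros; rewrite Dx; auto. apply continuous_const.
    * apply (continuous_ext (fun s => 2 * (r - 1) * (1 + s * (r - 1)))). intros; rewrite Dv; auto.
      apply cont_R. auto_derive; auto.
    * unfold gv. apply pow_lt. nra.
  - apply hlength_const. intros t Ht. rewrite Dx, Dv. unfold gv.
    replace ((0 ^ 2 + (2 * (r - 1) * (1 + t * (r - 1))) ^ 2) / (1 + t * (r - 1)) ^ 2) with ((2 * (r-1))^2).
    apply sqrt_pow2; lra. field. nra.
Qed.

Lemma Dist_geo v d : 1 <= v -> 0 < d < 2*PI ->
  Dist v d = 2 * (d/2) / cos (atan (Tt v d)).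
Proof.
  intros Hv Hd. destruct (geo v d Hv Hd) as (HT & Ha & Hc & Hs & HcT & _).
  unfold Dist. destruct (Req_EM_T d 0); [lra|].
  set (c := cos (atan (Tt v d))) in *.
  replace (sqrt (1 + Tt v d ^2)) with (1/c). field. lra.
  symmetry. apply sqrt_lem_1. nra. apply Rlt_le, Rdiv_lt_0_compat; lra.
  apply (Rmult_eq_reg_l (c^2)). rewrite HcT. field. lra. apply pow_nonzero. lra.
Qed.

Lemma upper_geo v d : 1 <= v -> 0 < d < 2*PI -> Rbar_le (dH 0 1 (fF v d) v) (Dist v d).
Proof.
  intros Hv Hd. rewrite (Dist_geo v d Hv Hd).
  destruct (geo v d Hv Hd) as (HT & Ha & Hc & Hs & HcT & Hcab & Hab & Hb & HfF).
  set (b := d/2) in *. set (a := atan (Tt v d)) in *. set (c := cos a) in *.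
  set (gx := fun t => (t * b + (sin (2*a) - sin (2*(a - t*b)))/2) / c^2).
  set (gv := fun t => cos (a - t*b) ^2 / c^2).
  assert (Dx : forall t, Derive gx t = b * (1 + cos (2*(a - t*b))) / c^2).
  { intros t. apply is_derive_unique. unfold gx. auto_derive. all: try lra. unfold Rminus. field. lra. }
  assert (Dv : forall t, Derive gv t = 2 * b * cos (a - t*b) * sin (a - t*b) / c^2).
  { intros t. apply is_derive_unique. unfold gv. auto_derive. all: try lra. unfold Rminus. field. lra. }
  assert (Hpos : forall t, 0 <= t <= 1 -> 0 < cos (a - t*b)).
  { intros t Ht. apply cos_gt_0; nra. }
  replace (2 * b / c) with (hlength gx gv).
  apply dH_le_curve.
  - unfold admissible. split; [|split; [|split; [|split]]].
    + unfold gx. replace (a - 0*b) with a by ring. field. lra.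
    + unfold gv. replace (a - 0*b) with a by ring. fold c. field. lra.
    + unfold gx. replace (a - 1*b) with (a-b) by ring. rewrite HfF.
      rewrite !sin_2a. fold c. field. lra.
    + unfold gv. replace (a - 1*b) with (a-b) by ring. rewrite Hcab.
      replace ((c * sqrt v)^2 / c^2) with (sqrt v * sqrt v) by (field; lra). apply sqrt_sqrt; lra.
    + intros t Ht. split; [|split; [|split; [|split]]].
      * unfold gx. auto_derive. lra.
      * unfold gv. auto_derive. lra.
      * apply (continuous_ext (fun s => b * (1 + cos (2*(a - s*b))) / c^2)). intros; rewrite Dx; auto.
        apply cont_R. auto_derive. lra.
      * apply (continuous_ext (fun s => 2 * b * cos (a - s*b) * sin (a - s*b) / c^2)). intros; rewrite Dv; auto.
        apply cont_R. auto_derive. lra.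
      * unfold gv. apply Rdiv_lt_0_compat. apply pow_lt. apply Hpos; lra. apply pow_lt; lra.
  - apply hlength_const. intros t Ht. rewrite Dx, Dv. unfold gv.
    assert (Hp := Hpos t (conj (Rlt_le _ _ (proj1 Ht)) (Rlt_le _ _ (proj2 Ht)))).
    set (p := a - t*b) in *.
    assert (Hsc := sin2_cos2 p). unfold Rsqr in Hsc.
    replace ((b * (1 + cos (2 * p)) / c ^ 2) ^ 2 + (2 * b * cos p * sin p / c ^ 2) ^ 2)
      with (4 * b^2 * cos p ^2 * (cos p ^2 + sin p ^2) / c^4).
    2:{ rewrite cos_2a_cos. field. lra. }
    replace (4 * b ^ 2 * cos p ^ 2 * (cos p ^ 2 + sin p ^ 2) / c ^ 4 / (cos p ^ 2 / c ^ 2))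
      with ((2*b/c)^2).
    apply sqrt_pow2. apply Rlt_le, Rdiv_lt_0_compat; lra.
    replace (cos p ^2 + sin p ^2) with 1 by nra. field. split; lra.
Qed.

Lemma cR_mult (f g : R -> R) x : continuous f x -> continuous g x -> continuous (fun y => f y * g y) x.
Proof. intros. apply (continuous_mult f g); auto. Qed.
Lemma cR_plus (f g : R -> R) x : continuous f x -> continuous g x -> continuous (fun y => f y + g y) x.
Proof. intros. apply (continuous_plus f g); auto. Qed.
Lemma cR_opp (f : R -> R) x : continuous f x -> continuous (fun y => - f y) x.
Proof. intros. apply (continuous_opp f); auto. Qed.
Lemma cR_inv (f : R -> R) x : continuous f x -> f x <> 0 -> continuous (fun y => / f y) x.
Proof. intros. apply (continuous_Rinv_comp f); auto. Qed.
Lemma cR_sqrt (f : R -> R) x : continuous f x -> continuous (fun y => sqrt (f y)) x.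
Proof. intros. apply (continuous_sqrt_comp f); auto. Qed.
Lemma cR_abs (f : R -> R) x : continuous f x -> continuous (fun y => Rabs (f y)) x.
Proof. intros. apply (continuous_Rabs_comp f); auto. Qed.
Lemma cR_const (c : R) x : continuous (fun _ : R => c) x.
Proof. apply continuous_const. Qed.
Lemma cR_pow2 (f : R -> R) x : continuous f x -> continuous (fun y => f y ^ 2) x.
Proof. intros. apply (continuous_ext (fun y => f y * f y)). intros; simpl; ring. apply cR_mult; auto. Qed.
Lemma cR_comp (f g : R -> R) x : continuous f x -> continuous g (f x) -> continuous (fun y => g (f y)) x.
Proof. intros. apply (continuous_comp f g); auto. Qed.

Definition kf (a w : R) : R := sqrt (/ w - a^2).

Lemma kf_cont a w : 0 < w -> continuous (kf a) w.
Proof.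
  intros Hw. unfold kf. apply (cR_sqrt (fun w => / w - a^2)).
  apply (cR_plus (fun w => / w) (fun _ => - a^2)).
  apply (cR_inv (fun w => w)). apply continuous_id. lra. apply cR_const.
Qed.

Lemma pointwise_calib a X Y w : 0 < w -> 0 <= a -> a^2 * w <= 1 ->
  a * X + kf a w * Rabs Y <= sqrt ((X^2 + Y^2) / w).
Proof.
  intros Hw Ha Haw. unfold kf.
  assert (Hk : 0 <= / w - a^2).
  { apply (Rmult_le_reg_l w); auto. rewrite Rmult_0_r. rewrite Rmult_minus_distr_l, Rinv_r by lra. lra. }
  set (k := sqrt (/ w - a^2)).
  assert (Hk2 : k * k = / w - a^2) by (apply sqrt_sqrt; auto).
  assert (Hk0 : 0 <= k) by apply sqrt_pos.
  set (Z := Rabs Y). assert (HZ : Z * Z = Y^2) by (unfold Z; rewrite <- Rabs_mult, Rabs_right; [ring| nra]).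
  destruct (Rle_dec (a * X + k * Z) 0). apply Rle_trans with 0; auto. apply sqrt_pos.
  rewrite <- (sqrt_pow2 (a * X + k * Z)) by lra. apply sqrt_le_1_alt.
  replace ((X^2 + Y^2)/w) with ((a^2 + k*k) * (X^2 + Z*Z)).
  2:{ rewrite Hk2, HZ. field. lra. }
  assert (E: (a^2 + k*k)*(X^2+Z*Z) - (a*X+k*Z)^2 = (a*Z - k*X)^2) by ring.
  pose proof (pow2_ge_0 (a*Z - k*X)). lra.
Qed.

Lemma calib gx gv x2 v2 a h tm :
  admissible gx gv 0 1 x2 v2 -> 0 <= a ->
  (forall t, 0 <= t <= 1 -> gv t <= h) -> a^2 * h <= 1 -> 0 <= tm <= 1 ->
  a * x2 + RInt (kf a) 1 (gv tm) + RInt (kf a) v2 (gv tm) <= hlength gx gv.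
Proof.
  intros [Hx0 [Hv0 [Hx1 [Hv1 Hadm]]]] Ha Hh Hah Htm.
  set (Dx := Derive gx). set (Dv := Derive gv).
  assert (Hgv : forall t, 0 <= t <= 1 -> continuous gv t).
  { intros t Ht. apply cont_R. destruct (Hadm t Ht) as (?&?&?&?&?); auto. }
  assert (Hw : forall t, 0 <= t <= 1 -> 0 < gv t) by (intros t Ht; destruct (Hadm t Ht) as (?&?&?&?&?); auto).
  assert (HDx : forall t, 0 <= t <= 1 -> continuous Dx t) by (intros t Ht; destruct (Hadm t Ht) as (?&?&?&?&?); auto).
  assert (HDv : forall t, 0 <= t <= 1 -> continuous Dv t) by (intros t Ht; destruct (Hadm t Ht) as (?&?&?&?&?); auto).
  assert (HEx : forall t, 0 <= t <= 1 -> ex_derive gx t) by (intros t Ht; destruct (Hadm t Ht) as (?&?&?&?&?); auto).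
  assert (HEv : forall t, 0 <= t <= 1 -> ex_derive gv t) by (intros t Ht; destruct (Hadm t Ht) as (?&?&?&?&?); auto).
  assert (Haw : forall t, 0 <= t <= 1 -> a^2 * gv t <= 1).
  { intros t Ht. apply Rle_trans with (a^2*h); auto. apply Rmult_le_compat_l. apply pow2_ge_0. auto. }
  assert (Hk : forall t, 0 <= t <= 1 -> continuous (fun s => kf a (gv s)) t).
  { intros t Ht. apply (cR_comp gv (kf a)). auto. apply kf_cont. auto. }
  set (S := fun t => sqrt ((Dx t ^ 2 + Dv t ^ 2) / gv t)).
  set (P1 := fun t => kf a (gv t) * Rabs (Dv t)).
  set (Q := fun t => Dv t * kf a (gv t)).
  assert (cS : forall t, 0 <= t <= 1 -> continuous S t).
  { intros t Ht. unfold S. apply (cR_sqrt (fun t => (Dx t ^ 2 + Dv t ^ 2) / gv t)).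
    apply (cR_mult (fun t => Dx t ^ 2 + Dv t ^ 2) (fun t => / gv t)).
    apply (cR_plus (fun t => Dx t ^ 2) (fun t => Dv t ^ 2)); apply cR_pow2; auto.
    apply cR_inv; auto. specialize (Hw t Ht). lra. }
  assert (cP1 : forall t, 0 <= t <= 1 -> continuous P1 t).
  { intros t Ht. unfold P1. apply cR_mult. auto. apply cR_abs. auto. }
  assert (cQ : forall t, 0 <= t <= 1 -> continuous Q t).
  { intros t Ht. unfold Q. apply cR_mult; auto. }
  assert (cQ' : forall t, 0 <= t <= 1 -> continuous (fun s => - Q s) t).
  { intros t Ht. apply cR_opp; auto. }
  assert (cL : forall t, 0 <= t <= 1 -> continuous (fun s => a * Dx s + P1 s) t).
  { intros t Ht. apply cR_plus. apply cR_mult. apply cR_const. auto. auto. }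
  assert (EX : forall f : R -> R, (forall t, 0 <= t <= 1 -> continuous f t) -> forall u w, 0 <= u <= w -> w <= 1 -> ex_RInt f u w).
  { intros f Hf u w Hu Hw1. apply (ex_RInt_continuous (V:=R_CompleteNormedModule)). intros z Hz.
    rewrite Rmin_left, Rmax_right in Hz by lra. apply Hf. lra. }
  assert (St1 : RInt (fun s => a * Dx s + P1 s) 0 1 <= RInt S 0 1).
  { apply RInt_le; try lra. apply EX; auto; lra. apply EX; auto; lra.
    intros t Ht. unfold S, P1. apply pointwise_calib. apply Hw; lra. auto. apply Haw; lra. }
  assert (St2 : RInt (fun s => a * Dx s + P1 s) 0 1 = a * x2 + RInt P1 0 1).
  { assert (I1 : is_RInt Dx 0 1 (RInt Dx 0 1)) by (apply (RInt_correct (V:=R_CompleteNormedModule)); apply EX; auto; lra).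
    assert (I2 : is_RInt P1 0 1 (RInt P1 0 1)) by (apply (RInt_correct (V:=R_CompleteNormedModule)); apply EX; auto; lra).
    assert (I3 := is_RInt_plus _ _ _ _ _ _ (is_RInt_scal _ _ _ a _ I1) I2).
    transitivity (a * RInt Dx 0 1 + RInt P1 0 1).
    { apply is_RInt_unique. exact I3. }
    unfold Dx. rewrite RInt_Derive.
    - rewrite Hx1, Hx0. unfold Rminus. rewrite Ropp_0, Rplus_0_r. reflexivity.
    - intros t Ht. rewrite Rmin_left, Rmax_right in Ht by lra. apply HEx; lra.
    - intros t Ht. rewrite Rmin_left, Rmax_right in Ht by lra. apply HDx; lra. }
  assert (St3 : RInt P1 0 1 = plus (RInt P1 0 tm) (RInt P1 tm 1)).
  { rewrite RInt_Chasles; auto. apply EX; auto; lra. apply EX; auto; lra. }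
  assert (St4 : RInt Q 0 tm <= RInt P1 0 tm).
  { destruct (Req_dec tm 0) as [E|E]. subst tm. rewrite !RInt_point. lra.
    apply RInt_le; try lra. apply EX; auto; lra. apply EX; auto; lra.
    intros t Ht. unfold Q, P1. rewrite Rmult_comm. apply Rmult_le_compat_l.
    apply sqrt_pos. apply Rle_abs. }
  assert (St5 : RInt (fun s => - Q s) tm 1 <= RInt P1 tm 1).
  { destruct (Req_dec tm 1) as [E|E]. subst tm. rewrite !RInt_point. lra.
    apply RInt_le; try lra. apply EX; auto; lra. apply EX; auto; lra.
    intros t Ht. unfold Q, P1. replace (- (Dv t * kf a (gv t))) with (kf a (gv t) * (- Dv t)) by ring.
    apply Rmult_le_compat_l. apply sqrt_pos. rewrite <- Rabs_Ropp. apply Rle_abs. }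
  assert (Comp : forall u w, 0 <= u <= w -> w <= 1 -> RInt Q u w = RInt (kf a) (gv u) (gv w)).
  { intros u w Hu Hw1. rewrite <- (RInt_comp (V:=R_CompleteNormedModule) (kf a) gv Dv).
    - apply RInt_ext. intros; unfold Q, scal; simpl; unfold mult; simpl; ring.
    - intros x Hx. rewrite Rmin_left, Rmax_right in Hx by lra. apply kf_cont. apply Hw; lra.
    - intros x Hx. rewrite Rmin_left, Rmax_right in Hx by lra. split.
      apply Derive_correct. apply HEv; lra. apply HDv; lra. }
  assert (St6 : RInt (fun s => - Q s) tm 1 = RInt (kf a) v2 (gv tm)).
  { rewrite (RInt_opp Q). 2:{ apply EX; auto; lra. }
    rewrite Comp by lra. rewrite Hv1. rewrite <- opp_RInt_swap. unfold opp; simpl. ring.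
    apply (ex_RInt_continuous (V:=R_CompleteNormedModule)). intros z Hz.
    apply kf_cont. 
    assert (0 < v2) by (rewrite <- Hv1; apply Hw; lra).
    assert (0 < gv tm) by (apply Hw; lra).
    destruct (Rle_dec v2 (gv tm)).
    rewrite Rmin_left, Rmax_right in Hz by lra. lra.
    rewrite Rmin_right, Rmax_left in Hz by lra. lra. }
  rewrite Comp in St4 by lra. rewrite Hv0 in St4.
  unfold hlength. fold Dx Dv. fold S.
  unfold plus in St3; simpl in St3. lra.
Qed.

Definition Bf (s : R) : R := asin s + s * sqrt (1 - s^2).

Lemma asin_pos s : 0 < s <= 1 -> 0 < asin s <= PI/2.
Proof.
  intros Hs. pose proof (asin_bound s). split; [|lra].
  destruct (Rle_lt_dec (asin s) 0) as [H0|H0]; auto.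
  assert (H1 : sin (asin s) <= sin 0) by (apply sin_incr_1; lra).
  rewrite sin_asin, sin_0 in H1 by lra. lra.
Qed.

Lemma Kint_closed a w1 w2 : 0 < a -> 0 < w1 -> 0 < w2 -> a^2 * w1 <= 1 -> a^2 * w2 <= 1 ->
  RInt (kf a) w1 w2 = (Bf (a * sqrt w2) - Bf (a * sqrt w1)) / a.
Proof.
  intros Ha Hw1 Hw2 H1 H2.
  assert (Hs : forall w, 0 < w -> a^2 * w <= 1 -> 0 < a * sqrt w <= 1).
  { intros w Hw Hw'. split. apply Rmult_lt_0_compat; auto. apply sqrt_lt_R0; auto.
    assert (0 <= a * sqrt w) by (apply Rmult_le_pos; [lra|apply sqrt_pos]).
    apply Rsqr_incr_0_var; [|lra]. unfold Rsqr. replace (a * sqrt w * (a * sqrt w)) with (a^2 * (sqrt w * sqrt w)) by ring.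
    rewrite sqrt_sqrt; lra. }
  set (p1 := asin (a * sqrt w1)). set (p2 := asin (a * sqrt w2)).
  assert (Hp1 : 0 < p1 <= PI/2) by (apply asin_pos, Hs; auto).
  assert (Hp2 : 0 < p2 <= PI/2) by (apply asin_pos, Hs; auto).
  set (g := fun y => sin y ^ 2 / a^2). set (dg := fun y => 2 * sin y * cos y / a^2).
  assert (Hg : forall w, 0 < w -> a^2 * w <= 1 -> g (asin (a * sqrt w)) = w).
  { intros w Hw Hw'. unfold g. rewrite sin_asin by (pose proof (Hs w Hw Hw'); lra).
    replace ((a * sqrt w)^2) with (a^2 * (sqrt w * sqrt w)) by ring. rewrite sqrt_sqrt by lra. field. lra. }
  assert (Hin : forall y, Rmin p1 p2 <= y <= Rmax p1 p2 -> 0 < y <= PI/2).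
  { intros y Hy. split.
    apply Rlt_le_trans with (Rmin p1 p2); [|lra]. apply Rmin_glb_lt; lra.
    apply Rle_trans with (Rmax p1 p2); [lra|]. apply Rmax_lub; lra. }
  replace (RInt (kf a) w1 w2) with (RInt (kf a) (g p1) (g p2)) by (unfold p1, p2; rewrite !Hg; auto).
  rewrite <- (RInt_comp (V:=R_CompleteNormedModule) (kf a) g dg).
  2:{ intros y Hy. apply kf_cont. unfold g. specialize (Hin y Hy).
      assert (0 < sin y) by (apply sin_gt_0; pose proof PI2_Rlt_PI; lra).
      apply Rdiv_lt_0_compat. apply pow_lt; auto. apply pow_lt; lra. }
  2:{ intros y Hy. split. unfold g, dg. auto_derive. lra. field. lra.
      apply cont_R. unfold dg. auto_derive. lra. }
  rewrite (RInt_ext _ (fun y => 2 * cos y ^2 / a)).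
  2:{ intros y Hy. assert (Hy' : 0 < y <= PI/2) by (apply Hin; lra).
      assert (Hsy : 0 < sin y) by (apply sin_gt_0; pose proof PI2_Rlt_PI; lra).
      assert (Hcy : 0 <= cos y) by (apply cos_ge_0; lra).
      assert (Hsc := sin2_cos2 y). unfold Rsqr in Hsc.
      unfold scal; simpl; unfold mult; simpl. unfold kf, g, dg.
      replace (sqrt (/ (sin y ^ 2 / a ^ 2) - a ^ 2)) with (a * cos y / sin y).
      field. lra.
      symmetry. apply sqrt_lem_1.
      - replace (/ (sin y ^ 2 / a ^ 2) - a ^ 2) with ((a * cos y / sin y)^2). apply pow2_ge_0.
        field_simplify; try lra. replace (cos y ^2) with (1 - sin y ^2) by nra. field. lra.
      - apply Rdiv_le_0_compat; [apply Rmult_le_pos|]; lra.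
      - field_simplify; try lra. replace (cos y ^2) with (1 - sin y ^2) by nra. field. lra. }
  assert (I : is_RInt (fun y => 2 * cos y ^2 / a) p1 p2
      (minus ((fun y => (y + sin y * cos y) / a) p2) ((fun y => (y + sin y * cos y) / a) p1))).
  { apply (is_RInt_derive (fun y => (y + sin y * cos y) / a)).
    - intros y Hy. auto_derive. lra. pose proof (sin2_cos2 y) as Hsc. unfold Rsqr in Hsc. field_simplify; try lra.
      replace (sin y ^2) with (1 - cos y^2) by lra. field. lra.
    - intros y Hy. apply cont_R. auto_derive. lra. }
  rewrite (is_RInt_unique _ _ _ _ I).
  unfold minus, plus, opp; simpl. unfold p1, p2, Bf.
  rewrite !cos_asin by (pose proof (Hs w1 Hw1 H1); pose proof (Hs w2 Hw2 H2); lra).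
  rewrite !sin_asin by (pose proof (Hs w1 Hw1 H1); pose proof (Hs w2 Hw2 H2); lra).
  unfold Rsqr. replace ((a * sqrt w1)^2) with (a * sqrt w1 * (a * sqrt w1)) by ring.
  replace ((a * sqrt w2)^2) with (a * sqrt w2 * (a * sqrt w2)) by ring. field. lra.
Qed.

Lemma Kint0 w1 w2 : 0 < w1 -> 0 < w2 -> RInt (kf 0) w1 w2 = 2 * sqrt w2 - 2 * sqrt w1.
Proof.
  intros H1 H2.
  assert (Hin : forall y, Rmin w1 w2 <= y <= Rmax w1 w2 -> 0 < y).
  { intros y Hy. apply Rlt_le_trans with (Rmin w1 w2); [|lra]. apply Rmin_glb_lt; lra. }
  assert (I : is_RInt (kf 0) w1 w2 (minus ((fun y => 2 * sqrt y) w2) ((fun y => 2 * sqrt y) w1))).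
  { apply (is_RInt_derive (fun y => 2 * sqrt y)).
    - intros y Hy. specialize (Hin y Hy). auto_derive. auto. unfold kf.
      replace (/ y - 0^2) with (/ y) by ring. rewrite <- inv_sqrt by lra.
      field. apply Rgt_not_eq, sqrt_lt_R0. auto.
    - intros y Hy. apply kf_cont. auto. }
  rewrite (is_RInt_unique _ _ _ _ I).
  unfold minus, plus, opp; simpl. ring.
Qed.

Lemma asin_ge1 y : 1 <= y -> asin y = PI/2.
Proof. intros H. unfold asin. destruct (Rle_dec y (-1)); [lra|]. destruct (Rle_dec 1 y); [auto|lra]. Qed.

Lemma asin_compl x : 0 <= x <= 1 -> asin x + asin (sqrt (1 - x^2)) = PI/2.
Proof.
  intros Hx. pose proof (asin_bound x).
  assert (0 <= asin x).
  { destruct (Rle_lt_dec 0 (asin x)); auto.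
    assert (sin (asin x) < sin 0) by (apply sin_increasing_1; lra).
    rewrite sin_asin, sin_0 in H0 by lra. lra. }
  replace (sqrt (1 - x^2)) with (sin (PI/2 - asin x)).
  rewrite asin_sin by lra. ring.
  rewrite sin_shift, cos_asin by lra. unfold Rsqr. f_equal. ring.
Qed.

Lemma asin_cont_0 : continuity_pt asin 0.
Proof. apply derivable_continuous_pt. apply derivable_pt_asin. lra. Qed.

Lemma asin_cont_1 : continuity_pt asin 1.
Proof.
  set (h := fun y => PI/2 - asin (sqrt (((1 - y^2) + Rabs (1 - y^2))/2))).
  apply (continuity_pt_locally_ext h asin 1 1). lra.
  - intros y Hy. unfold Rdist in Hy. unfold h. apply Rabs_def2 in Hy.
    destruct (Rle_dec y 1).
    + rewrite Rabs_right by nra. replace ((1 - y ^ 2 + (1 - y ^ 2)) / 2) with (1 - y^2) by field.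
      pose proof (asin_compl y). lra.
    + rewrite Rabs_left by nra. replace ((1 - y ^ 2 + - (1 - y ^ 2)) / 2) with 0 by field.
      rewrite sqrt_0, asin_0, asin_ge1 by lra. ring.
  - unfold h. apply continuity_pt_minus. apply continuity_pt_const. intros ? ?; auto.
    apply (continuity_pt_comp (fun y => sqrt ((1 - y ^ 2 + Rabs (1 - y ^ 2)) / 2)) asin).
    + apply (continuity_pt_comp (fun y => (1 - y ^ 2 + Rabs (1 - y ^ 2)) / 2) sqrt).
      * apply (proj2 (continuity_pt_filterlim _ _)).
        apply (cR_mult (fun y => 1 - y ^ 2 + Rabs (1 - y ^ 2)) (fun _ => /2)); [|apply cR_const].
        apply (cR_plus (fun y => 1 - y^2) (fun y => Rabs (1 - y^2))).
        apply cont_R. auto_derive. auto.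
        apply (cR_abs (fun y => 1 - y^2)). apply cont_R. auto_derive. auto.
      * apply continuity_pt_sqrt. replace ((1 - 1 ^ 2 + Rabs (1 - 1 ^ 2)) / 2) with 0. lra.
        replace (1 - 1^2) with 0 by ring. rewrite Rabs_R0. field.
    + replace (sqrt ((1 - 1 ^ 2 + Rabs (1 - 1 ^ 2)) / 2)) with 0. apply asin_cont_0.
      replace (1 - 1^2) with 0 by ring. rewrite Rabs_R0. replace ((0+0)/2) with 0 by field. rewrite sqrt_0. auto.
Qed.

Lemma dR_plus (f g : R -> R) x df dg : is_derive f x df -> is_derive g x dg ->
  is_derive (fun y => f y + g y) x (df + dg).
Proof. intros. apply (is_derive_plus f g); auto. Qed.
Lemma dR_minus (f g : R -> R) x df dg : is_derive f x df -> is_derive g x dg ->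
  is_derive (fun y => f y - g y) x (df - dg).
Proof. intros. apply (is_derive_minus f g); auto. Qed.
Lemma dR_comp (f g : R -> R) x df dg : is_derive f (g x) df -> is_derive g x dg ->
  is_derive (fun y => f (g y)) x (dg * df).
Proof. intros. apply (is_derive_comp f g); auto. Qed.

Lemma is_derive_asin s : -1 < s < 1 -> is_derive asin s (1 / sqrt (1 - s^2)).
Proof.
  intros H. apply is_derive_Reals.
  pose proof (derive_pt_asin s H) as E. unfold derive_pt in E.
  destruct (derivable_pt_asin s H) as [l Hl]. simpl in E. subst l.
  unfold Rsqr in Hl. replace (s^2) with (s*s) by ring. exact Hl.
Qed.

Lemma is_derive_Bf s : -1 < s < 1 -> is_derive Bf s (2 * sqrt (1 - s^2)).
Proof.
  intros H. assert (Hp : 0 < 1 - s^2) by nra.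
  assert (Hq : 0 < sqrt (1 - s^2)) by (apply sqrt_lt_R0; auto).
  assert (Hqq : sqrt (1 - s^2) * sqrt (1 - s^2) = 1 - s^2) by (apply sqrt_sqrt; lra).
  eapply is_derive_ext. intros t. unfold Bf. reflexivity.
  replace (2 * sqrt (1 - s^2)) with (1 / sqrt (1 - s^2) + (sqrt (1 - s^2) - s^2 / sqrt (1 - s^2))).
  apply dR_plus. apply is_derive_asin; auto.
  auto_derive. auto. replace (1 + - (s*(s*1))) with (1 - s^2) by ring. field. lra.
  apply (Rmult_eq_reg_r (sqrt (1 - s^2))). 2: lra.
  field_simplify; try lra.
Qed.

Definition Aa (s : R) : R := asin s - s * sqrt (1 - s^2).
Definition Xx (r a : R) : R := (PI - Aa a - Aa (a*r)) / a^2.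
Definition Fx (x r a : R) : R := a * x + (PI - Bf a - Bf (a*r)) / a.

Lemma asin_nonneg s : 0 <= s -> 0 <= asin s.
Proof.
  intros Hs. pose proof (asin_bound s). destruct (Rle_lt_dec 0 (asin s)); auto.
  destruct (Rle_lt_dec 1 s). rewrite asin_ge1; lra.
  assert (sin (asin s) < sin 0) by (apply sin_increasing_1; lra).
  rewrite sin_asin, sin_0 in H0 by lra. lra.
Qed.

Lemma asin_mono s1 s2 : 0 <= s1 <= s2 -> s2 <= 1 -> asin s1 <= asin s2.
Proof.
  intros H1 H2. pose proof (asin_bound s1). pose proof (asin_bound s2).
  apply sin_incr_0; try lra. rewrite !sin_asin; lra.
Qed.

Lemma Aa_H s : 0 <= s <= 1 -> Aa s = asin s - sin (asin s) * cos (asin s).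
Proof. intros H. unfold Aa. rewrite sin_asin, cos_asin by lra. unfold Rsqr. f_equal. f_equal. f_equal. f_equal. ring. Qed.

Lemma H_mono t1 t2 : 0 <= t1 <= t2 -> t2 <= PI/2 ->
  t1 - sin t1 * cos t1 <= t2 - sin t2 * cos t2.
Proof.
  intros H1 H2.
  apply (mono_MVT (fun t => t - sin t * cos t) (fun t => 2 * sin t ^2)); try lra.
  - intros x Hx. auto_derive. auto. pose proof (sin2_cos2 x). unfold Rsqr in H. nra.
  - intros x Hx. apply cont_of_derive. auto_derive. auto.
  - intros x Hx. pose proof (pow2_ge_0 (sin x)). lra.
Qed.

Lemma Aa_mono s1 s2 : 0 <= s1 <= s2 -> s2 <= 1 -> Aa s1 <= Aa s2.
Proof.
  intros H1 H2. rewrite !Aa_H by lra. apply H_mono.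
  split. apply asin_nonneg; lra. apply asin_mono; lra. apply asin_bound.
Qed.

Lemma Aa_le s : 0 <= s <= 1 -> Aa s <= PI/2.
Proof.
  intros H. unfold Aa. pose proof (asin_bound s).
  assert (0 <= s * sqrt (1 - s^2)) by (apply Rmult_le_pos; [lra|apply sqrt_pos]). lra.
Qed.

Lemma X_mono r s1 s2 : 1 <= r -> 0 < s1 <= s2 -> s2 * r <= 1 -> Xx r s2 <= Xx r s1.
Proof.
  intros Hr H1 H2. unfold Xx.
  assert (Hs2 : s2 <= 1) by nra.
  assert (A1 : Aa s1 <= Aa s2) by (apply Aa_mono; lra).
  assert (A2 : Aa (s1*r) <= Aa (s2*r)) by (apply Aa_mono; nra).
  assert (N2 : 0 <= PI - Aa s2 - Aa (s2 * r)).
  { pose proof (Aa_le s2). pose proof (Aa_le (s2*r)). assert (0 <= s2 * r) by nra.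
    assert (Aa s2 <= PI/2) by (apply Aa_le; lra). assert (Aa (s2*r) <= PI/2) by (apply Aa_le; lra). lra. }
  apply Rle_trans with ((PI - Aa s2 - Aa (s2 * r)) / s1 ^ 2).
  - unfold Rdiv. apply Rmult_le_compat_l; auto. apply Rinv_le_contravar. apply pow_lt; lra.
    apply pow_incr; lra.
  - unfold Rdiv. apply Rmult_le_compat_r. apply Rlt_le, Rinv_0_lt_compat, pow_lt; lra. lra.
Qed.

Lemma Bf_cont s : 0 <= s <= 1 -> continuity_pt Bf s.
Proof.
  intros H. unfold Bf. apply continuity_pt_plus.
  - destruct (Req_dec s 1). subst. apply asin_cont_1.
    apply derivable_continuous_pt. apply derivable_pt_asin. lra.
  - apply (proj2 (continuity_pt_filterlim _ _)).
    apply (cR_mult (fun s => s) (fun s => sqrt (1 - s^2))). apply continuous_id.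
    apply (cR_sqrt (fun s => 1 - s^2)). apply cont_R. auto_derive. auto.
Qed.

Lemma F_deriv x r a : 1 <= r -> 0 < a -> a * r < 1 -> is_derive (Fx x r) a (x - Xx r a).
Proof.
  intros Hr Ha Har. assert (Ha1 : a < 1) by nra.
  unfold Fx.
  assert (D1 := is_derive_Bf a ltac:(lra)).
  assert (D2 := dR_comp Bf (fun a => a * r) a _ r (is_derive_Bf (a*r) ltac:(nra)) ltac:(auto_derive; auto; ring)).
  assert (D3 : is_derive (fun a => PI - Bf a - Bf (a*r)) a (- (2 * sqrt (1 - a^2)) - r * (2 * sqrt (1 - (a*r)^2)))).
  { replace (- (2 * sqrt (1 - a^2)) - r * (2 * sqrt (1 - (a*r)^2))) with ((0 - 2 * sqrt (1 - a^2)) - r * (2 * sqrt (1 - (a*r)^2))) by ring.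
    apply (dR_minus (fun a => PI - Bf a) (fun a => Bf (a*r))); auto.
    apply (dR_minus (fun _ => PI) Bf). apply (is_derive_const (K:=R_AbsRing) (V:=R_NormedModule)). auto. }
  assert (D4 := is_derive_div _ (fun a => a) a _ 1 D3 (is_derive_id a) ltac:(lra)).
  assert (D5 := is_derive_scal (fun a => a) a x 1 (is_derive_id a)).
  apply (is_derive_ext (K:=R_AbsRing) (V:=R_NormedModule) (fun a => x * a + (PI - Bf a - Bf (a*r)) / a)). { intros t. simpl. ring. }
  replace (x - Xx r a) with (x * 1 + ((- (2 * sqrt (1 - a^2)) - r * (2 * sqrt (1 - (a*r)^2))) * a - (PI - Bf a - Bf (a*r)) * 1) / a ^2).
  apply dR_plus; auto.
  unfold Xx, Aa, Bf. field. lra.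
Qed.

Lemma F_cont x r a : 1 <= r -> 0 < a -> a * r <= 1 -> continuity_pt (Fx x r) a.
Proof.
  intros Hr Ha Har. assert (Ha1 : a <= 1) by nra. unfold Fx.
  apply continuity_pt_plus. apply continuity_pt_mult. apply derivable_continuous_pt, derivable_pt_id.
  apply continuity_pt_const. intros ? ?; auto.
  apply continuity_pt_div.
  - apply continuity_pt_minus. apply continuity_pt_minus. apply continuity_pt_const. intros ? ?; auto.
    apply Bf_cont; lra.
    apply (continuity_pt_comp (fun a => a * r) Bf). apply cont_of_derive. auto_derive. auto.
    apply Bf_cont. nra.
  - apply derivable_continuous_pt, derivable_pt_id.
  - lra.
Qed.

Lemma F_min_left x r c a : 1 <= r -> 0 < a <= c -> c * r <= 1 -> x <= Xx r c ->
  Fx x r c <= Fx x r a.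
Proof.
  intros Hr Ha Hc HX.
  assert (- Fx x r a <= - Fx x r c); [|lra].
  apply (mono_MVT (fun t => - Fx x r t) (fun t => Xx r t - x)); try lra.
  - intros t Ht. replace (Xx r t - x) with (- (x - Xx r t)) by ring.
    apply (is_derive_opp (K:=R_AbsRing) (V:=R_NormedModule) (Fx x r)). apply F_deriv; nra.
  - intros t Ht. apply continuity_pt_opp. apply F_cont; nra.
  - intros t Ht. assert (Xx r c <= Xx r t) by (apply X_mono; lra). lra.
Qed.

Lemma F_min_right x r c a : 1 <= r -> 0 < c <= a -> a * r <= 1 -> Xx r c <= x ->
  Fx x r c <= Fx x r a.
Proof.
  intros Hr Ha Hc HX.
  apply (mono_MVT (Fx x r) (fun t => x - Xx r t)); try lra.
  - intros t Ht. apply F_deriv; nra.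
  - intros t Ht. apply F_cont; nra.
  - intros t Ht. assert (Xx r t <= Xx r c) by (apply X_mono; nra). lra.
Qed.

Lemma sqrt_1mcos2 t : 0 <= t <= PI/2 -> sqrt (1 - cos t ^2) = sin t.
Proof.
  intros H. apply sqrt_lem_1. pose proof (COS_bound t). nra.
  apply sin_ge_0; pose proof PI2_Rlt_PI; lra.
  pose proof (sin2_cos2 t). unfold Rsqr in H0. nra.
Qed.

Lemma asin_cos t : 0 <= t <= PI/2 -> asin (cos t) = PI/2 - t.
Proof. intros H. rewrite <- sin_shift. apply asin_sin. lra. Qed.

Lemma Bf_cos t : 0 <= t <= PI/2 -> Bf (cos t) = PI/2 - t + cos t * sin t.
Proof. intros H. unfold Bf. rewrite asin_cos, sqrt_1mcos2 by auto. ring. Qed.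

Lemma Aa_cos t : 0 <= t <= PI/2 -> Aa (cos t) = PI/2 - t - cos t * sin t.
Proof. intros H. unfold Aa. rewrite asin_cos, sqrt_1mcos2 by auto. ring. Qed.

Lemma Bf_1 : Bf 1 = PI/2.
Proof. unfold Bf. rewrite asin_1. replace (1 - 1^2) with 0 by ring. rewrite sqrt_0. ring. Qed.

Lemma curve_max gv : (forall t, 0 <= t <= 1 -> ex_derive gv t) ->
  exists tm, 0 <= tm <= 1 /\ forall t, 0 <= t <= 1 -> gv t <= gv tm.
Proof.
  intros H. destruct (continuity_ab_maj gv 0 1) as [tm [H1 H2]]. lra.
  intros c Hc. apply cont_of_derive. auto.
  exists tm. auto.
Qed.

Lemma F_bound gx gv x2 v tm :
  admissible gx gv 0 1 x2 v -> 1 <= v -> 0 <= tm <= 1 ->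
  (forall t, 0 <= t <= 1 -> gv t <= gv tm) ->
  Fx x2 (sqrt v) (1 / sqrt (gv tm)) <= hlength gx gv.
Proof.
  intros Hadm Hv Htm Hmax.
  set (h := gv tm) in *.
  destruct Hadm as (Hx0 & Hv0 & Hx1 & Hv1 & Hrest) eqn:Eadm.
  assert (Hh1 : 1 <= h) by (rewrite <- Hv0; apply Hmax; lra).
  assert (Hhv : v <= h) by (rewrite <- Hv1; apply Hmax; lra).
  assert (Hsh : 0 < sqrt h) by (apply sqrt_lt_R0; lra).
  assert (Hshh : sqrt h * sqrt h = h) by (apply sqrt_sqrt; lra).
  set (a := 1 / sqrt h).
  assert (Ha : 0 < a) by (unfold a; apply Rdiv_lt_0_compat; lra).
  assert (Hah : a^2 * h = 1) by (unfold a; replace ((1/sqrt h)^2 * h) with (h / (sqrt h * sqrt h)) by (field; lra); rewrite Hshh; field; lra).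
  assert (Hsv : 0 < sqrt v) by (apply sqrt_lt_R0; lra).
  assert (Hsvv : sqrt v * sqrt v = v) by (apply sqrt_sqrt; lra).
  pose proof (calib gx gv x2 v a h tm Hadm ltac:(lra) Hmax ltac:(lra) Htm) as C.
  fold h in C.
  rewrite (Kint_closed a 1 h) in C by (try lra; nra).
  rewrite (Kint_closed a v h) in C by (try lra; nra).
  replace (a * sqrt h) with 1 in C by (unfold a; field; lra).
  rewrite sqrt_1, Rmult_1_r, Bf_1 in C.
  unfold Fx. fold a.
  replace (a * x2 + (PI - Bf a - Bf (a * sqrt v)) / a) with (a * x2 + (PI / 2 - Bf a) / a + (PI / 2 - Bf (a * sqrt v)) / a).
  lra. field. lra.
Qed.

Lemma lower v d gx gv : 1 <= v -> 0 <= d < 2*PI ->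
  admissible gx gv 0 1 (f_fun v d) v -> Dist v d <= hlength gx gv.
Proof.
  intros Hv Hd Hadm.
  assert (HEv : forall t, 0 <= t <= 1 -> ex_derive gv t).
  { intros t Ht. destruct Hadm as (_&_&_&_&H). destruct (H t Ht) as (?&?&?); auto. }
  destruct (curve_max gv HEv) as [tm [Htm Hmax]].
  assert (Hv1 : gv 1 = v) by (destruct Hadm as (_&_&_&H&_); auto).
  assert (Hsv : 0 < sqrt v) by (apply sqrt_lt_R0; lra).
  assert (Hsvv : sqrt v * sqrt v = v) by (apply sqrt_sqrt; lra).
  destruct (Req_dec d 0) as [E|E].
  - subst d. unfold Dist. destruct (Req_EM_T 0 0); [|lra].
    pose proof (calib gx gv (f_fun v 0) v 0 (gv tm) 1 Hadm ltac:(lra) Hmax ltac:(lra) ltac:(lra)) as C.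
    rewrite Hv1, RInt_point in C. rewrite Kint0 in C by lra. rewrite sqrt_1 in C. unfold zero in C; simpl in C. lra.
  - assert (Hd' : 0 < d < 2*PI) by lra.
    rewrite (Dist_geo v d Hv Hd').
    rewrite (f_fun_eq v d E) in Hadm.
    destruct (geo v d Hv Hd') as (HT & Ha & Hc & Hs & HcT & Hcab & Hab & Hb & HfF).
    set (b := d/2) in *. set (al := atan (Tt v d)) in *. set (c := cos al) in *.
    set (x2 := fF v d) in *. set (r := sqrt v) in *.
    pose proof (F_bound gx gv x2 v tm Hadm Hv Htm Hmax) as FB. fold r in FB.
    set (h := gv tm) in *.
    assert (Hh1 : 1 <= h) by (destruct Hadm as (_&H0&_); rewrite <- H0; apply Hmax; lra).
    assert (Hhv : v <= h) by (rewrite <- Hv1; apply Hmax; lra).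
    assert (Hsh : 0 < sqrt h) by (apply sqrt_lt_R0; lra).
    assert (Hshh : sqrt h * sqrt h = h) by (apply sqrt_sqrt; lra).
    set (a := 1 / sqrt h) in *.
    assert (Hap : 0 < a) by (unfold a; apply Rdiv_lt_0_compat; lra).
    assert (Hah : a^2 * h = 1) by (unfold a; replace ((1/sqrt h)^2 * h) with (h / (sqrt h * sqrt h)) by (field; lra); rewrite Hshh; field; lra).
    assert (Hrh : r <= sqrt h) by (apply sqrt_le_1_alt; lra).
    assert (Har : a * r <= 1) by (unfold a; apply (Rmult_le_reg_r (sqrt h)); [lra|]; field_simplify; lra).
    assert (Hr1 : 1 <= r) by (apply sqrt_ge1; auto).
    assert (Hcr : c * r <= 1) by (rewrite <- Hcab; apply COS_bound).
    assert (Hsal : 0 <= sin al) by (apply sin_ge_0; pose proof PI2_Rlt_PI; lra).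
    assert (HBc : Bf c = PI/2 - al + c * sin al) by (unfold c; apply Bf_cos; lra).
    assert (HAc : Aa c = PI/2 - al - c * sin al) by (unfold c; apply Aa_cos; lra).
    destruct (Rle_dec al b) as [Hover|Hmono].
    + (* over the top *)
      set (t := b - al).
      assert (Ht : 0 <= t <= PI/2) by (unfold t; lra).
      assert (Hcrt : c * r = cos t) by (unfold t; rewrite <- Hcab; replace (b - al) with (-(al - b)) by ring; rewrite cos_neg; auto).
      assert (Hsin : sin (al - b) = - sin t) by (unfold t; replace (al - b) with (-(b - al)) by ring; apply sin_neg).
      assert (Hcos : cos (al - b) = cos t) by (rewrite Hcab; auto).
      assert (HBcr : Bf (c * r) = PI/2 - t + cos t * sin t) by (rewrite Hcrt; apply Bf_cos; auto).
      assert (HAcr : Aa (c * r) = PI/2 - t - cos t * sin t) by (rewrite Hcrt; apply Aa_cos; auto).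
      assert (HX : Xx r c = x2).
      { unfold Xx. rewrite HfF, HAc, HAcr, Hsin, Hcos. unfold t. field. lra. }
      assert (HF : Fx x2 r c = 2 * b / c).
      { unfold Fx. rewrite HfF, HBc, HBcr, Hsin, Hcos. unfold t. field. lra. }
      destruct (Rle_dec a c).
      * pose proof (F_min_left x2 r c a Hr1 ltac:(lra) Hcr ltac:(lra)). lra.
      * pose proof (F_min_right x2 r c a Hr1 ltac:(lra) Har ltac:(lra)). lra.
    + (* monotone *)
      set (t := al - b).
      assert (Ht : 0 <= t <= PI/2) by (unfold t; lra).
      assert (Hcrt : c * r = cos t) by (unfold t; rewrite <- Hcab; auto).
      assert (HBcr : Bf (c * r) = PI/2 - t + cos t * sin t) by (rewrite Hcrt; apply Bf_cos; auto).
      assert (HAcr : Aa (c * r) = PI/2 - t - cos t * sin t) by (rewrite Hcrt; apply Aa_cos; auto).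
      assert (Hst : 0 <= sin t) by (apply sin_ge_0; pose proof PI2_Rlt_PI; lra).
      assert (Hst2 : sin t <= t) by (apply sin_le_id; lra).
      assert (Hct : 0 <= cos t <= 1) by (split; [apply cos_ge_0; lra| apply COS_bound]).
      destruct (Rle_dec (c^2 * h) 1) as [Hlow|Hhigh].
      * pose proof (calib gx gv x2 v c h 1 Hadm ltac:(lra) Hmax Hlow ltac:(lra)) as C.
        rewrite Hv1, RInt_point in C. unfold zero in C; simpl in C. rewrite Rplus_0_r in C.
        rewrite (Kint_closed c 1 v) in C by (try lra; nra).
        rewrite sqrt_1, Rmult_1_r in C. fold r in C. rewrite HBc, HBcr in C.
        rewrite HfF in C. fold t in C.
        replace (c * ((b + sin al * c - sin t * cos t) / c ^ 2) + (PI / 2 - t + cos t * sin t - (PI / 2 - al + c * sin al)) / c)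
          with (2 * b / c) in C. lra.
        unfold t. field. lra.
      * assert (Hac : a <= c).
        { assert (a^2 <= c^2) by (apply (Rmult_le_reg_r h); lra).
          destruct (Rle_dec a c) as [ ? | Hn ]; auto. exfalso. assert (c < a) by lra. assert (c*c < a*a) by nra. simpl in *. nra. }
        assert (HX : x2 <= Xx r c).
        { unfold Xx. rewrite HfF, HAc, HAcr. fold t.
          unfold Rdiv. apply Rmult_le_compat_r. apply Rlt_le, Rinv_0_lt_compat, pow_lt; lra.
          unfold t in *. nra. }
        assert (HF : 2 * b / c <= Fx x2 r c).
        { unfold Fx. rewrite HfF, HBc, HBcr. fold t.
          replace (c * ((b + sin al * c - sin t * cos t) / c ^ 2) + (PI - (PI / 2 - al + c * sin al) - (PI / 2 - t + cos t * sin t)) / c)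
            with ((2 * b + 2 * (t - sin t * cos t)) / c) by (unfold t; field; lra).
          unfold Rdiv. apply Rmult_le_compat_r. apply Rlt_le, Rinv_0_lt_compat; lra.
          assert (sin t * cos t <= t) by nra. lra. }
        pose proof (F_min_left x2 r c a Hr1 ltac:(lra) Hcr HX). lra.
Qed.

Theorem lemma2p8 (x1 v1 x2 v2 : R) :
  0 <= v1 -> 0 <= v2 ->
  0 <= delta x1 v1 -> delta x1 v1 <= delta x2 v2 -> delta x2 v2 < 2 * PI ->
  1 <= v1 -> v1 <= v2 ->
  Rbar_le (dH 0 1 x1 v1) (dH 0 1 x2 v2).
Proof.
  intros H1 H2 Hd1 Hd12 Hd2 Hv1 Hv12.
  destruct (delta_spec x1 v1 Hv1) as [_ E1].
  destruct (delta_spec x2 v2 ltac:(lra)) as [_ E2].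
  set (t1 := delta x1 v1) in *. set (t2 := delta x2 v2) in *.
  apply Rbar_le_trans with (Finite (Dist v1 t1)).
  - destruct (Req_dec t1 0) as [E|E].
    + rewrite E in E1. unfold f_fun in E1. destruct (Req_EM_T 0 0); [|lra].
      subst x1. unfold Dist. rewrite E. destruct (Req_EM_T 0 0); [|lra].
      apply upper_vert; auto.
    + rewrite <- E1, f_fun_eq by auto. apply upper_geo; auto. lra.
  - apply Rbar_le_trans with (Finite (Dist v2 t2)).
    + simpl. apply Dist_mono; lra.
    + unfold dH. destruct (Glb_Rbar_correct (fun L => exists gx gv,
        admissible gx gv 0 1 x2 v2 /\ L = hlength gx gv)) as [_ HG].
      apply HG. intros L [gx [gv [Ha EL]]]. subst L. simpl.
      rewrite <- E2 in Ha. apply lower; auto; lra.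
Qed.
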